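(* Let $p\in(1,\infty)$, let $X$ be a Banach space and $(Y,d_Y)$ a metric space, and suppose $X$ coarse Lipschitz embeds into $Y$. If $Y$ has property HFC$_{p,d}$ (resp. HIC$_{p,d}$, resp. HC$_{p,d}$), then $X$ has property HFC$_{p,d}$ (resp. HIC$_{p,d}$, resp. HC$_{p,d}$).
   Context: Notation: for infinite $\mathbb M\subseteq\mathbb N$ and $k\in\mathbb N$, $[\mathbb M]^k$ is the set of $\bar n=(n_1,\dots,n_k)\in\mathbb M^k$ with $n_1<\dots<n_k$, with Hamming distance $d_{\mathbb H}(\bar n,\bar m)=|\{j:n_j\ne m_j\}|$; $[\mathbb M]^\omega$ is the set of infinite subsets of $\mathbb M$; $I_k(\mathbb M)=\{(\bar n,\bar m): n_1<m_1<\dots<n_k<m_k\}$; $H_j(\mathbb M)=\{(\bar n,\bar m)\in([\mathbb M]^k)^2: n_i=m_i\ (i\ne j),\ n_j<m_j\}$. For a metric space $(M,d)$, $p\in(1,\infty)$, $\lambda>0$, and a Lipschitz $f:([\mathbb N]^k,d_{\mathbb H})\to M$, put $\alpha_j=\sup_{(\bar n,\bar m)\in H_j(\mathbb N)}d(f(\bar n),f(\bar m))$. $M$ has $\lambda$-HFC$_{p,d}$ (resp. $\lambda$-HIC$_{p,d}$) if for every $k$ and every such $f$ there is $\mathbb M\in[\mathbb N]^\omega$ with $d(f(\bar n),f(\bar m))\le\lambda(\sum_{j=1}^k\alpha_j^p)^{1/p}$ for all $\bar n,\bar m\in[\mathbb M]^k$ (resp. all $(\bar n,\bar m)\in I_k(\mathbb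 M)$). $M$ has $\lambda$-HC$_{p,d}$ if for every $k$ and every such $f$ there are $\bar n,\bar m\in[\mathbb N]^k$ with $\bar n\cap\bar m=\varnothing$ (as sets) and $d(f(\bar n),f(\bar m))\le\lambda(\sum_{j=1}^k\alpha_j^p)^{1/p}$. Property HFC$_{p,d}$ (etc.) means $\lambda$-HFC$_{p,d}$ (etc.) for some $\lambda>0$. A map $\varphi:X\to Y$ is a coarse Lipschitz embedding if there are $A,B,C,D\in(0,\infty)$ with $\rho_\varphi(t)\ge At-B$ and $\omega_\varphi(t)\le Ct+D$ for all $t\ge0$, where $\rho_\varphi(t)=\inf\{d_Y(\varphi(x),\varphi(y)):\|x-y\|\ge t\}$ and $\omega_\varphi(t)=\sup\{d_Y(\varphi(x),\varphi(y)):\|x-y\|\le t\}$. *)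

(* Defs.v *)
From HB Require Import structures.
From mathcomp Require Import all_boot all_order all_algebra.
From mathcomp Require Import all_classical all_reals all_analysis.
Set Implicit Arguments. Unset Strict Implicit. Unset Printing Implicit Defensive.
Import Order.TTheory GRing.Theory Num.Theory.
Import numFieldNormedType.Exports.
Local Open Scope classical_set_scope.
Local Open Scope ring_scope.

Definition is_metric (R : realType) (M : Type) (d : M -> M -> R) : Prop :=
  [/\ forall x y, 0 <= d x y,
      forall x y, d x y = 0 <-> x = y,
      forall x y, d x y = d y x &
      forall x y z, d x z <= d x y + d y z].

(* n : 'I_k -> nat represents (n_1,...,n_k); it is in [MM]^k iff strictly
   increasing with all entries in MM. *)
Definition in_kset (k : nat) (MM : set nat) (n : 'I_k -> nat) : Prop :=
  (forall i j : 'I_k, (i < j)%N -> (n i < n j)%N) /\ (forall i, MM (n i)).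

Definition dH (R : realType) (k : nat) (n m : 'I_k -> nat) : R :=
  (#|[set j : 'I_k | n j != m j]|)%:R.

Definition lipschitz_H (R : realType) (M : Type) (d : M -> M -> R) (k : nat)
  (f : ('I_k -> nat) -> M) : Prop :=
  exists L : R, forall n m, in_kset setT n -> in_kset setT m ->
    d (f n) (f m) <= L * dH R n m.

Definition in_H (k : nat) (MM : set nat) (j : 'I_k) (n m : 'I_k -> nat) : Prop :=
  [/\ in_kset MM n, in_kset MM m, (forall i, i != j -> n i = m i) & (n j < m j)%N].

Definition in_I (k : nat) (MM : set nat) (n m : 'I_k -> nat) : Prop :=
  [/\ in_kset MM n, in_kset MM m,
      (forall i : 'I_k, (n i < m i)%N) &
      (forall i j : 'I_k, nat_of_ord j = (nat_of_ord i).+1 -> (m i < n j)%N)].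

Definition alphaH (R : realType) (M : Type) (d : M -> M -> R) (k : nat)
  (f : ('I_k -> nat) -> M) (j : 'I_k) : R :=
  sup [set r | exists n m, in_H setT j n m /\ r = d (f n) (f m)].

Definition alpha_pnorm (R : realType) (M : Type) (d : M -> M -> R) (p : R)
  (k : nat) (f : ('I_k -> nat) -> M) : R :=
  (\sum_(j < k) (alphaH d f j) `^ p) `^ p^-1.

Definition lam_HFC (R : realType) (M : Type) (d : M -> M -> R) (p lam : R) : Prop :=
  forall (k : nat) (f : ('I_k -> nat) -> M), lipschitz_H d f ->
    exists MM : set nat, infinite_set MM /\
      forall n m, in_kset MM n -> in_kset MM m ->
        d (f n) (f m) <= lam * alpha_pnorm d p f.

Definition lam_HIC (R : realType) (M : Type) (d : M -> M -> R) (p lam : R) : Prop :=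
  forall (k : nat) (f : ('I_k -> nat) -> M), lipschitz_H d f ->
    exists MM : set nat, infinite_set MM /\
      forall n m, in_I MM n m ->
        d (f n) (f m) <= lam * alpha_pnorm d p f.

Definition lam_HC (R : realType) (M : Type) (d : M -> M -> R) (p lam : R) : Prop :=
  forall (k : nat) (f : ('I_k -> nat) -> M), lipschitz_H d f ->
    exists n m, [/\ in_kset setT n, in_kset setT m,
      (forall i j : 'I_k, n i != m j) &
      d (f n) (f m) <= lam * alpha_pnorm d p f].

Definition HFC (R : realType) (M : Type) (d : M -> M -> R) (p : R) : Prop :=
  exists lam : R, 0 < lam /\ lam_HFC d p lam.
Definition HIC (R : realType) (M : Type) (d : M -> M -> R) (p : R) : Prop :=
  exists lam : R, 0 < lam /\ lam_HIC d p lam.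
Definition HC (R : realType) (M : Type) (d : M -> M -> R) (p : R) : Prop :=
  exists lam : R, 0 < lam /\ lam_HC d p lam.

Definition normdist (R : realType) (X : normedModType R) (x y : X) : R := `|x - y|.

(* Coarse Lipschitz embedding, with rho/omega unfolded pointwise:
   rho(t) >= A t - B  iff  ||x-y|| >= t -> d(phi x, phi y) >= A t - B (inf over
   the empty set being +oo), and omega(t) <= C t + D  iff
   ||x-y|| <= t -> d(phi x, phi y) <= C t + D. *)
Definition coarse_lipschitz_embedding (R : realType) (X : normedModType R)
  (Y : Type) (dY : Y -> Y -> R) (phi : X -> Y) : Prop :=
  exists A B C D : R, [/\ 0 < A, 0 < B, 0 < C, 0 < D &
    forall t : R, 0 <= t -> forall x y : X,
      (t <= `|x - y| -> A * t - B <= dY (phi x) (phi y)) /\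
      (`|x - y| <= t -> dY (phi x) (phi y) <= C * t + D)].

(* Main.v *)
Require Import Defs.
From HB Require Import structures.
From mathcomp Require Import all_boot all_order all_algebra.
From mathcomp Require Import all_classical all_reals all_analysis.
From mathcomp Require Import zify ring lra.
Import Order.TTheory GRing.Theory Num.Theory.
Import numFieldNormedType.Exports.
Local Open Scope ring_scope.

Lemma H_wit {k : nat} (j : 'I_k) : exists n m, in_H setT j n m.
Proof.
exists (fun i : 'I_k => (2 * i)%N), (fun i : 'I_k => (2 * i + (i == j))%N).
split.
- by split => // i i' ii'; lia.
- split => // i i' ii'; case: (i == j); case: (i' == j) => /=; lia.
- by move=> i /negbTE ->; rewrite addn0.
- by rewrite eqxx; lia.
Qed.

Lemma dH_le (R : realType) k (n m : 'I_k -> nat) : dH R n m <= k%:R.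
Proof. by rewrite /dH ler_nat -[X in (_ <= X)%N]card_ord max_card. Qed.

Lemma dH_ge0 (R : realType) k (n m : 'I_k -> nat) : 0 <= dH R n m.
Proof. by rewrite /dH ler0n. Qed.

Lemma alpha_props (R : realType) (M : Type) (d : M -> M -> R) k
  (f : ('I_k -> nat) -> M) (j : 'I_k) :
  (forall x y, 0 <= d x y) -> lipschitz_H d f ->
  [/\ 0 <= alphaH d f j &
   forall n m, in_H setT j n m -> d (f n) (f m) <= alphaH d f j].
Proof.
move=> d0 [L HL].
have hs : has_sup [set r | exists n m, in_H setT j n m /\ r = d (f n) (f m)].
  split.
    have [n [m H]] := H_wit j.
    by exists (d (f n) (f m)), n, m; split.
  exists (`|L| * k%:R) => r [n [m [[Hn Hm _ _] ->]]].
  apply: (le_trans (HL n m Hn Hm)).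
  apply: (le_trans (ler_norm _)); rewrite normrM.
  by apply: ler_wpM2l => //; rewrite ger0_norm ?dH_ge0 ?dH_le.
have ub := sup_upper_bound hs.
split.
  have [n [m H]] := H_wit j.
  apply: (le_trans (d0 (f n) (f m))); apply: ub; by exists n, m; split.
by move=> n m H; apply: ub; exists n, m; split.
Qed.

Lemma alpha_le (R : realType) (M : Type) (d : M -> M -> R) k
  (f : ('I_k -> nat) -> M) (j : 'I_k) c :
  (forall n m, in_H setT j n m -> d (f n) (f m) <= c) -> alphaH d f j <= c.
Proof.
move=> H; apply: ge_sup.
  have [n [m Hnm]] := H_wit j.
  by exists (d (f n) (f m)), n, m; split.
by move=> r [n [m [Hnm ->]]]; apply: H.
Qed.

Lemma powR_add_le (R : realType) (p x y : R) : 0 <= p -> 0 <= x -> 0 <= y ->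
  (x + y) `^ p <= 2 `^ p * (x `^ p + y `^ p).
Proof.
move=> p0 x0 y0.
wlog xy : x y x0 y0 / x <= y.
  move=> W; case: (leP x y) => h; first exact: W.
  by rewrite addrC [_ `^ p + _]addrC; apply: W => //; apply: ltW.
apply: (@le_trans _ _ ((2 * y) `^ p)).
  apply: ge0_ler_powR => //; rewrite ?nnegrE ?addr_ge0 ?mulr_ge0 //.
  by rewrite mulr_natl mulr2n lerD2r.
rewrite powRM //; apply: ler_wpM2l; first exact: powR_ge0.
by rewrite lerDr powR_ge0.
Qed.
Lemma const_key (T : Type) k (f : ('I_k -> nat) -> T) :
  (forall j n m, in_H setT j n m -> f n = f m) ->
  forall n K, in_kset setT n -> (forall i, n i < K)%N -> f n = f (fun i => (K + i)%N).
Proof.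
move=> H n K [Hn _] HK.
pose r l := fun i : 'I_k => if (k - l <= i)%N then (K + i)%N else n i.
have rk : forall l, in_kset setT (r l).
  move=> l; split=> // i i' ii'; rewrite /r.
  have h1 := Hn i i' ii'; have h2 := HK i; have h3 := HK i'.
  move: ii' h1 h2 h3; move: (n i) (n i') (nat_of_ord i) (nat_of_ord i') => a b c d.
  clear; case: ifP; case: ifP; move=> *; timeout 20 lia.
have step : forall l, (l < k)%N -> f (r l) = f (r l.+1).
  move=> l lk.
  have pf : (k - l.+1 < k)%N by clear -lk; lia.
  apply: (H (Ordinal pf)); split; [exact: rk|exact: rk| |].
  - move=> i ne.
    have ne' : (nat_of_ord i != k - l.+1)%N.
      by apply/negP => /eqP h; move/negP: ne; apply; apply/eqP; apply: val_inj.
    rewrite /r; move: ne'; move: (n i) (nat_of_ord i) => a c.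
    clear; case: ifP; case: ifP; move=> *; timeout 20 lia.
  - rewrite /r /=; have := HK (Ordinal pf); move: (n (Ordinal pf)) => a /=.
    move: lk; clear; case: ifP; case: ifP; move=> *; timeout 20 lia.
have : forall l, (l <= k)%N -> f n = f (r l).
  elim => [|l IH] lk.
  - by congr f; apply: funext => i; rewrite /r subn0 leqNgt ltn_ord.
  - have lk' : (l < k)%N by [].
    rewrite IH; last by apply: ltnW. rewrite step //. 

move=> /(_ k (leqnn k)) ->; congr f; apply: funext => i; rewrite /r subnn.
by rewrite leq0n.
Qed.
Lemma const_of (T : Type) k (f : ('I_k -> nat) -> T) :
  (forall j n m, in_H setT j n m -> f n = f m) ->
  forall n m, in_kset setT n -> in_kset setT m -> f n = f m.
Proof.
move=> H n m Hn Hm.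
pose K := (\max_(i < k) n i + \max_(i < k) m i).+1.
have HnK : forall i, (n i < K)%N.
  by move=> i; rewrite /K ltnS; apply: leq_trans (leq_bigmax i) (leq_addr _ _).
have HmK : forall i, (m i < K)%N.
  by move=> i; rewrite /K ltnS; apply: leq_trans (leq_bigmax i) (leq_addl _ _).
by rewrite (@const_key _ _ f H _ _ Hn HnK) (@const_key _ _ f H _ _ Hm HmK).
Qed.

Lemma normZ_diff (R : realType) (X : normedModType R) (s : R) (x y : X) :
  0 <= s -> `|s *: x - s *: y| = s * `|x - y|.
Proof. by move=> s0; rewrite -scalerBr normrZ ger0_norm. Qed.

Lemma transfer (R : realType) (p : R) (X : normedModType R) (Y : Type)
  (dY : Y -> Y -> R) (phi : X -> Y) (A B C D lam : R) :
  1 < p -> is_metric dY -> 0 < A -> 0 < B -> 0 < C -> 0 < D -> 0 < lam ->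
  (forall t : R, 0 <= t -> forall x y : X,
      (t <= `|x - y| -> A * t - B <= dY (phi x) (phi y)) /\
      (`|x - y| <= t -> dY (phi x) (phi y) <= C * t + D)) ->
  forall k (f : ('I_k -> nat) -> X), lipschitz_H (@normdist R X) f ->
  0 < \sum_(j < k) (alphaH (@normdist R X) f j) `^ p ->
  exists g : ('I_k -> nat) -> Y, lipschitz_H dY g /\
    forall n m, in_kset setT n -> in_kset setT m ->
      dY (g n) (g m) <= lam * alpha_pnorm dY p g ->
      normdist (f n) (f m) <= (5 * lam * C / A) * alpha_pnorm (@normdist R X) p f.
Proof.
move=> p1 [d0 d_eq d_sym d_tri] A0 B0 C0 D0 lam0 emb k f fL S0.
set a := alphaH (@normdist R X) f.
set S := \sum_(j < k) a j `^ p in S0.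
have p0 : 0 <= p by apply: ltW; apply: lt_trans p1.
have nd0 : forall x y : X, 0 <= normdist x y by move=> x y; exact: normr_ge0.
have aP := fun j => @alpha_props R X _ k f j nd0 fL.
set N := S `^ p^-1.
have N0 : 0 < N by apply: powR_gt0.
pose s := 1 + k%:R * D `^ p / (C `^ p * S) + B / (lam * C * N).
have CpS0 : 0 < C `^ p * S by apply: mulr_gt0 => //; apply: powR_gt0.
have t1 : 0 <= k%:R * D `^ p / (C `^ p * S).
  by apply: divr_ge0; [apply: mulr_ge0; [exact: ler0n|exact: powR_ge0]|exact: ltW].
have t2 : 0 <= B / (lam * C * N).
  by apply: divr_ge0; [exact: ltW|apply: ltW; apply: mulr_gt0 => //; apply: mulr_gt0].
have s1 : 1 <= s by rewrite /s -addrA lerDl addr_ge0.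
have s0 : 0 < s by apply: lt_le_trans s1.
pose g := fun n => phi (s *: f n).
have gL : lipschitz_H dY g.
  case: fL => L HL; exists (C * s * L + D) => n m Hn Hm.
  have h := HL n m Hn Hm; rewrite /normdist in h.
  have dH0 := @dH_ge0 R k n m.
  have [e|ne] := eqVneq (dH R n m) 0.
    rewrite e mulr0 in h; have : f n = f m.
      by apply/eqP; rewrite -subr_eq0 -normr_eq0 eq_le h normr_ge0.
    by rewrite /g => ->; rewrite e mulr0 (proj2 (d_eq _ _)).
  have dH1 : 1 <= dH R n m.
    move: ne; rewrite /dH pnatr_eq0 -lt0n => h1; by rewrite ler1n.
  have tt : 0 <= s * (L * dH R n m).
    by apply: mulr_ge0; [exact: ltW|apply: le_trans h; exact: normr_ge0].
  have := proj2 (emb _ tt (s *: f n) (s *: f m)).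
  rewrite normZ_diff; last exact: ltW; move=> /(_ (ler_wpM2l (ltW s0) h)) hd.
  rewrite /g; apply: (le_trans hd).
  have : D <= D * dH R n m by rewrite ler_peMr // ltW.
  have -> : C * (s * (L * dH R n m)) = C * s * L * dH R n m by rewrite !mulrA.
  rewrite mulrDl; lra.
have gP := fun j => @alpha_props R Y dY k g j d0 gL.
have bj : forall j, alphaH dY g j <= C * s * a j + D.
  move=> j; apply: (@alpha_le R Y dY k g j) => n m Hnm.
  have [_ aub] := aP j.
  have hn := aub n m Hnm; rewrite /normdist in hn.
  have tt : 0 <= s * `|f n - f m| by apply: mulr_ge0; [exact: ltW|exact: normr_ge0].
  have := proj2 (emb _ tt (s *: f n) (s *: f m)).
  rewrite normZ_diff; last exact: ltW; move=> /(_ (lexx _)) hd.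
  rewrite /g; apply: (le_trans hd); rewrite lerD2r -mulrA.
  by apply: ler_wpM2l; [exact: ltW|apply: ler_wpM2l; [exact: ltW|]].
have b0 : forall j, 0 <= alphaH dY g j by move=> j; case: (gP j).
have a0 : forall j, 0 <= a j by move=> j; case: (aP j).
have Cs0 : 0 <= C * s by apply: mulr_ge0; apply: ltW.
have sumb : \sum_(j < k) (alphaH dY g j) `^ p <= (4 * C * s) `^ p * S.
  apply: (@le_trans _ _ (\sum_(j < k) (C * s * a j + D) `^ p)).
    apply: ler_sum => j _; apply: ge0_ler_powR => //; rewrite ?nnegrE //.
    by apply: addr_ge0; [apply: mulr_ge0|apply: ltW].
  apply: (@le_trans _ _ (\sum_(j < k) 2 `^ p * ((C * s * a j) `^ p + D `^ p))).
    apply: ler_sum => j _; apply: powR_add_le => //; last exact: ltW.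
    exact: mulr_ge0.
  have e : forall j, (C * s * a j) `^ p = (C * s) `^ p * a j `^ p.
    by move=> j; rewrite powRM.
  rewrite -mulr_sumr big_split /= sumr_const card_ord.
  under eq_bigr => j _ do rewrite e.
  rewrite -mulr_sumr -/S -[D `^ p *+ k]mulr_natl.
  have kD : k%:R * D `^ p <= (C * s) `^ p * S.
    have h1 : k%:R * D `^ p <= s * (C `^ p * S).
      rewrite -ler_pdivrMr //.
      by rewrite /s -addrA addrC -addrA lerDl addr_ge0 // ler01.
    apply: (le_trans h1); rewrite powRM; [|exact: ltW|exact: ltW].
    have ss := le1r_powR s1 (ltW p1).
    have cs0 : 0 <= C `^ p * S by apply: mulr_ge0 => //; [exact: powR_ge0|exact: ltW].
    have -> : C `^ p * s `^ p * S = s `^ p * (C `^ p * S).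
      by rewrite mulrA [s `^ p * _]mulrC.
    by apply: ler_wpM2r.
  have P2 : 2 <= 2 `^ p by apply: le1r_powR; [rewrite ler1n|exact: ltW].
  have -> : (4 * C * s) `^ p = 2 `^ p * 2 `^ p * (C * s) `^ p.
    rewrite (_ : 4 * C * s = 2 * 2 * (C * s)); last by ring.
    rewrite (@powRM _ (2 * 2) (C * s) p) ?mulr_ge0 ?(ltW C0) ?(ltW s0) //.
    by congr (_ * _); apply: powRM; exact: ler0n.
  have X0 : 0 <= (C * s) `^ p * S by apply: mulr_ge0; [exact: powR_ge0|exact: ltW].
  set P := 2 `^ p in P2 *; set Xx := (C * s) `^ p * S in X0 kD *.
  rewrite -mulrA -/Xx.
  have P0 : 0 <= P by apply: le_trans P2; exact: ler0n.
  have PX : 0 <= P * Xx by apply: mulr_ge0.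
  nra.
have normg : alpha_pnorm dY p g <= 4 * C * s * N.
  rewrite /alpha_pnorm.
  apply: (le_trans (ge0_ler_powR _ _ _ sumb)).
  - by rewrite invr_ge0.
  - by rewrite nnegrE sumr_ge0 // => j _; exact: powR_ge0.
  - by rewrite nnegrE mulr_ge0 ?powR_ge0 // ltW.
  rewrite (@powRM _ _ S); [|exact: powR_ge0|exact: ltW].
  have pn0 : p != 0 by rewrite gt_eqF // (lt_trans _ p1).
  rewrite -powRrM mulfV // powRr1 //.
  apply: mulr_ge0; [apply: mulr_ge0|]; [|exact: ltW|exact: ltW].
  by rewrite ler0n.
exists g; split; first exact: gL.
move=> n m Hn Hm hg.
have tt : 0 <= s * `|f n - f m| by apply: mulr_ge0; [exact: ltW|exact: normr_ge0].
have := proj1 (emb _ tt (s *: f n) (s *: f m)).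
rewrite normZ_diff; last exact: ltW.
move=> /(_ (lexx _)) hl.
have hB : B <= s * (lam * C * N).
  rewrite -ler_pdivrMr; last by apply: mulr_gt0 => //; apply: mulr_gt0.
  by rewrite /s lerDr addr_ge0 // ler01.
have hn : lam * alpha_pnorm dY p g <= lam * (4 * C * s * N).
  by apply: ler_wpM2l; [exact: ltW|exact: normg].
rewrite /alpha_pnorm -/a -/S -/N /normdist.
rewrite -(ler_pM2l (mulr_gt0 A0 s0)).
have -> : A * s * (5 * lam * C / A * N) = 5 * lam * C * s * N.
  by field; rewrite gt_eqF.
have hl' : A * (s * `|f n - f m|) - B <= dY (g n) (g m) := hl.
have h2 := le_trans hl' (le_trans hg hn).
rewrite lerBlDr in h2.
have -> : 5 * lam * C * s * N = lam * (4 * C * s * N) + s * (lam * C * N) by ring.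
rewrite -mulrA; apply: (le_trans h2); by rewrite lerD2l.
Qed.

Lemma zero_case (R : realType) (p : R) (X : normedModType R) k
  (f : ('I_k -> nat) -> X) : 0 < p -> lipschitz_H (@normdist R X) f ->
  \sum_(j < k) (alphaH (@normdist R X) f j) `^ p = 0 ->
  forall n m, in_kset setT n -> in_kset setT m -> f n = f m.
Proof.
move=> p0 fL S0; apply: const_of => j n m Hnm.
have [_ ub] := @alpha_props R X _ k f j (fun x y => normr_ge0 _) fL.
have aj : alphaH (@normdist R X) f j = 0.
  apply: (@powR_eq0_eq0 _ _ p).
  by apply: (psumr_eq0P _ S0) => // i _; exact: powR_ge0.
by have := ub n m Hnm; rewrite aj /normdist normr_le0 subr_eq0 => /eqP.
Qed.

Theorem mainTheorem2 (R : realType) (p : R) (X : completeNormedModType R)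
  (Y : Type) (dY : Y -> Y -> R) :
  1 < p -> is_metric dY ->
  (exists phi : X -> Y, coarse_lipschitz_embedding dY phi) ->
  [/\ HFC dY p -> HFC (@normdist R X) p,
      HIC dY p -> HIC (@normdist R X) p &
      HC dY p -> HC (@normdist R X) p].
Proof.
move=> p1 Hmet [phi [A [B [C [D [A0 B0 C0 D0 emb]]]]]].
have p0 : 0 < p by apply: lt_trans p1.
have l'0 : forall lam, 0 < lam -> 0 < 5 * lam * C / A.
  by move=> l l0; apply: divr_gt0 => //; apply: mulr_gt0 => //; apply: mulr_gt0.
have key := fun lam l0 => @transfer R p X Y dY phi A B C D lam p1 Hmet A0 B0 C0 D0 l0 emb.
have dich : forall k (f : ('I_k -> nat) -> X),
    \sum_(j < k) (alphaH (@normdist R X) f j) `^ p = 0 \/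
    0 < \sum_(j < k) (alphaH (@normdist R X) f j) `^ p.
  move=> k f; have : 0 <= \sum_(j < k) (alphaH (@normdist R X) f j) `^ p.
    by apply: sumr_ge0 => j _; exact: powR_ge0.
  by rewrite le_eqVlt => /orP[/eqP h|h]; [left|right].
have zb : forall lam k (f : ('I_k -> nat) -> X) n m, 0 < lam ->
    f n = f m -> normdist (f n) (f m) <= 5 * lam * C / A * alpha_pnorm (@normdist R X) p f.
  move=> lam k f n m l0 ->; rewrite /normdist subrr normr0.
  by apply: mulr_ge0; [apply: ltW; exact: l'0|exact: powR_ge0].
have kset : forall k MM (n : 'I_k -> nat), in_kset MM n -> in_kset setT n.
  by move=> k MM n [h _]; split.
split.
- move=> [lam [l0 H]]; exists (5 * lam * C / A); split; first exact: l'0.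
  move=> k f fL; case: (dich k f) => [S0|Spos].
    exists setT; split; first exact: infinite_nat.
    by move=> n m Hn Hm; apply: zb => //; apply: (@zero_case R p X k f p0 fL S0).
  have [g [gL Hg]] := key lam l0 k f fL Spos.
  have [MM [inf HM]] := H k g gL.
  exists MM; split; first exact: inf.
  move=> n m Hn Hm.
  by apply: Hg; [exact: kset Hn|exact: kset Hm|exact: HM].
- move=> [lam [l0 H]]; exists (5 * lam * C / A); split; first exact: l'0.
  move=> k f fL; case: (dich k f) => [S0|Spos].
    exists setT; split; first exact: infinite_nat.
    move=> n m [Hn Hm _ _]; apply: zb => //.
    by apply: (@zero_case R p X k f p0 fL S0); [exact: kset Hn|exact: kset Hm].
  have [g [gL Hg]] := key lam l0 k f fL Spos.
  have [MM [inf HM]] := H k g gL.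
  exists MM; split; first exact: inf.
  move=> n m Hnm.
  case: (Hnm) => Hn Hm _ _.
  by apply: Hg; [exact: kset Hn|exact: kset Hm|exact: HM].
- move=> [lam [l0 H]]; exists (5 * lam * C / A); split; first exact: l'0.
  move=> k f fL; case: (dich k f) => [S0|Spos].
    have Hn : in_kset setT (fun i : 'I_k => nat_of_ord i) by split.
    have Hm : in_kset setT (fun i : 'I_k => (k + i)%N).
      by split => // i j ij; rewrite ltn_add2l.
    exists (fun i : 'I_k => nat_of_ord i), (fun i : 'I_k => (k + i)%N).
    split; [exact: Hn|exact: Hm| |].
      move=> i j; rewrite neq_ltn; apply/orP; left.
      by apply: (leq_trans (ltn_ord i)); apply: leq_addr.
    by apply: zb => //; apply: (@zero_case R p X k f p0 fL S0).
  have [g [gL Hg]] := key lam l0 k f fL Spos.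
  have [n [m [Hn Hm Hd HM]]] := H k g gL.
  exists n, m; split; [exact: Hn|exact: Hm|exact: Hd|].
  by apply: Hg.
Qed.
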